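(* Let $(\vdash,\overline{\cdot},\widehat{\cdot})$ be a setting satisfying Pre-Relevance, let $\mathcal{S},\mathcal{S}'\subseteq\mathcal{L}$ with $\mathcal{S}\mid\mathcal{S}'$, let $\mathsf{Sem}\in\{\mathsf{Cmp},\mathsf{Prf},\mathsf{Grd}\}$, and let $\mathcal{E}_1\in\mathsf{Sem}(\mathcal{AF}_{\vdash}(\mathcal{S}))$. Then there is an $\mathcal{E}\in\mathsf{Sem}(\mathcal{AF}_{\vdash}(\mathcal{S}\cup\mathcal{S}'))$ with $\mathcal{E}_1=\mathcal{E}\cap\mathit{Arg}_{\vdash}(\mathcal{S})$.
   Context: $\mathcal{L}$ is the set of formulas of a language built from propositional atoms; $\mathsf{Atoms}(\mathcal{S})$ is the set of atoms occurring in $\mathcal{S}$, and $\mathcal{S}_1\mid\mathcal{S}_2$ means $\mathsf{Atoms}(\mathcal{S}_1)\cap\mathsf{Atoms}(\mathcal{S}_2)=\emptyset$. A setting is $(\vdash,\overline{\cdot},\widehat{\cdot})$ with ${\vdash}\subseteq\wp_{\sf fin}(\mathcal{L})\times\mathcal{L}$ arbitrary, $\overline{\cdot}:\mathcal{L}\to\wp(\mathcal{L})$, $\widehat{\cdot}$ assigning to each nonempty finite set a finite set of formulas, with $\widehat{\emptyset}=\emptyset$. $\mathit{Arg}_{\vdash}(\mathcal{S})=\{(\Gamma,\gamma):\Gamma\subseteq\mathcal{S}\text{ finite},\Gamma\vdash\gamma\}$; $\mathcal{AF}_{\vdash}(\mathcal{S})$ is the attack graph on it where $(\Gamma,\gamma)$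 attacks $(\Gamma',\gamma')$ iff $\gamma\in\overline{\phi}$ for some $\phi\in\widehat{\Gamma'}$. Complete extension = conflict-free set defending each member (every attacker of a member is attacked by a member) and containing every argument it defends; $\mathsf{Cmp}(\cdot)$ is the set of complete extensions, $\mathsf{Prf}(\cdot)$ the $\subseteq$-maximal ones, and $\mathsf{Grd}(\cdot)$ the singleton containing the $\subseteq$-minimal one. Pre-Relevance of the setting: (a) for all $\mathcal{S}_1,\mathcal{S}_2,\phi$ with $\mathcal{S}_1\cup\{\phi\}\mid\mathcal{S}_2$, $\mathcal{S}_1\cup\mathcal{S}_2\vdash\phi$ implies $\mathcal{S}_1'\vdash\phi$ for some $\mathcal{S}_1'\subseteq\mathcal{S}_1$; (b) primeness: for all sets of atoms $\mathcal{A}_1\mid\mathcal{A}_2$, all finite $\mathcal{S}_1,\mathcal{T}_1,\mathcal{S}_2,\mathcal{T}_2$ with $\mathsf{Atoms}(\mathcal{S}_i),\mathsf{Atoms}(\mathcal{T}_i)\subseteq\mathcal{A}_i$, and all $\phi,\psi$ with $\psi\in\overline{\phi}$, $\phi\in\widehat{\mathcal{T}_1\cup\mathcal{T}_2}$: if $\mathcal{S}_1\cup\mathcal{S}_2\vdash\psi$ then there are $i\in\{1,2\}$, $\mathcal{S}_i'\subseteq\mathcal{S}_i$, $\phi_i\in\widehat{\mathcal{T}_i}$, $\psi_i\in\overline{\phi_i}$ with $\mathcal{S}_i'\vdash\psi_i$; (c) $\widehat{\Delta}\subseteq\widehat{\Delta\cup\Delta'}$ for all finite $\Delta,\Delta'$.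 *)

(* Defs.v *)
From mathcomp Require Import all_boot finmap.
Set Implicit Arguments. Unset Strict Implicit. Unset Printing Implicit Defensive.
Local Open Scope fset_scope.

Section Setting.
Variables (Form : choiceType) (Atom : Type) (atoms : Form -> Atom -> Prop).
Variables (vdash : {fset Form} -> Form -> Prop)
          (contr : Form -> Form -> Prop)   (* contr phi psi  <->  psi \in overline phi *)
          (hat : {fset Form} -> {fset Form}).

Definition AtomsOf (S : Form -> Prop) : Atom -> Prop :=
  fun a => exists f, S f /\ atoms f a.
Definition fsetP_ (D : {fset Form}) : Form -> Prop := fun f => f \in D.

Definition atom_disjoint (S1 S2 : Form -> Prop) : Prop :=
  forall a, AtomsOf S1 a -> AtomsOf S2 a -> False.

Definition atoms_within (D : {fset Form}) (A : Atom -> Prop) : Prop :=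
  forall a, AtomsOf (fsetP_ D) a -> A a.

Definition pre_relevance : Prop :=
  (forall (S1 S2 : {fset Form}) (phi : Form),
      atom_disjoint (fsetP_ (phi |` S1)) (fsetP_ S2) ->
      vdash (S1 `|` S2) phi ->
      exists S1' : {fset Form}, S1' `<=` S1 /\ vdash S1' phi) /\
  (forall (A1 A2 : Atom -> Prop),
      (forall a, A1 a -> A2 a -> False) ->
      forall (S1 T1 S2 T2 : {fset Form}),
      atoms_within S1 A1 -> atoms_within T1 A1 ->
      atoms_within S2 A2 -> atoms_within T2 A2 ->
      forall phi psi : Form,
      contr phi psi -> phi \in hat (T1 `|` T2) ->
      vdash (S1 `|` S2) psi ->
      (exists S1' phi1 psi1, S1' `<=` S1 /\ phi1 \in hat T1 /\
                             contr phi1 psi1 /\ vdash S1' psi1) \/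
      (exists S2' phi2 psi2, S2' `<=` S2 /\ phi2 \in hat T2 /\
                             contr phi2 psi2 /\ vdash S2' psi2)) /\
  (forall D D' : {fset Form}, hat D `<=` hat (D `|` D')).

Definition argument : Type := ({fset Form} * Form)%type.

Definition Arg (S : Form -> Prop) : argument -> Prop :=
  fun a => (forall f, f \in a.1 -> S f) /\ vdash a.1 a.2.

Definition attacks (a b : argument) : Prop :=
  exists phi, phi \in hat b.1 /\ contr phi a.2.

Definition conflict_free (S : Form -> Prop) (E : argument -> Prop) : Prop :=
  forall a b, E a -> E b -> ~ attacks a b.

Definition defends (S : Form -> Prop) (E : argument -> Prop) (a : argument) : Prop :=
  forall b, Arg S b -> attacks b a -> exists c, E c /\ attacks c b.

Definition complete_ext (S : Form -> Prop) (E : argument -> Prop) : Prop :=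
  (forall a, E a -> Arg S a) /\
  conflict_free S E /\
  (forall a, E a -> defends S E a) /\
  (forall a, Arg S a -> defends S E a -> E a).

Definition subset_args (E F : argument -> Prop) : Prop := forall a, E a -> F a.

Definition preferred_ext (S : Form -> Prop) (E : argument -> Prop) : Prop :=
  complete_ext S E /\
  (forall F, complete_ext S F -> subset_args E F -> subset_args F E).

Definition grounded_ext (S : Form -> Prop) (E : argument -> Prop) : Prop :=
  complete_ext S E /\ (forall F, complete_ext S F -> subset_args E F).

End Setting.

Inductive semantics := Cmp | Prf | Grd.

Definition in_sem (Form : choiceType) (vdash : {fset Form} -> Form -> Prop)
  (contr : Form -> Form -> Prop) (hat : {fset Form} -> {fset Form})
  (sem : semantics) (S : Form -> Prop) (E : argument Form -> Prop) : Prop :=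
  match sem with
  | Cmp => complete_ext vdash contr hat S E
  | Prf => preferred_ext vdash contr hat S E
  | Grd => grounded_ext vdash contr hat S E
  end.

(* Main.v *)
Require Import Defs.
From mathcomp Require Import all_boot finmap.
From mathcomp Require boolp classical_sets.
From Stdlib Require Import Classical.
Set Implicit Arguments. Unset Strict Implicit. Unset Printing Implicit Defensive.
Local Open Scope fset_scope.

Section AF.
Variables (Form : choiceType) (vdash : {fset Form} -> Form -> Prop)
  (contr : Form -> Form -> Prop) (hat : {fset Form} -> {fset Form}).
Local Notation ArgV := (Arg vdash).
Local Notation att := (attacks contr hat).
Local Notation cmp := (complete_ext vdash contr hat).
Local Notation dfd := (defends vdash contr hat).

Lemma grounded_exists (T : Form -> Prop) : exists G, grounded_ext vdash contr hat T G.
Proof.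
pose closed (X : argument Form -> Prop) := forall b, ArgV T b -> dfd T X b -> X b.
pose G := fun a => forall X : argument Form -> Prop, closed X -> X a.
have GArg : forall a, G a -> ArgV T a by move=> a Ga; exact: (Ga (ArgV T) (fun b Hb _ => Hb)).
have Gcl : closed G.
  move=> b Hb Hd X HX; apply: (HX) => // c Hc Hcb.
  have [e [Ge Hec]] := Hd c Hc Hcb. exists e. split. exact: (Ge X HX). exact: Hec.
have Gdef : forall a, G a -> dfd T G a.
  move=> a Ga.
  pose X := fun a => ArgV T a /\ dfd T G a.
  have HX : closed X.
    move=> b Hb Hd; split => // c Hc Hcb.
    have [e [[He1 He2] Hec]] := Hd c Hc Hcb.
    exists e; split => //; exact: Gcl.
  exact: (Ga X HX).2.
have Gcf : conflict_free contr hat T G.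
  pose X := fun a => G a /\ forall b, G b -> ~ att a b /\ ~ att b a.
  have HX : closed X.
    move=> a Ha Hd.
    have Ga : G a.
      apply: Gcl => // c Hc Hca. have [e [[Ge _] Hec]] := Hd c Hc Hca. by exists e.
    split => // b Gb; split.
    - move=> Hab. have [g [Gg Hga]] := Gdef b Gb a Ha Hab.
      have [x [[_ Hx] Hxg]] := Hd g (GArg g Gg) Hga.
      by case: (Hx g Gg) => H _; apply: H.
    - move=> Hba. have [x [[_ Hx] Hxb]] := Hd b (GArg b Gb) Hba.
      by case: (Hx b Gb) => H _.
  move=> a b Ga Gb. have [_ Hx] := Ga X HX. by case: (Hx b Gb).
exists G; split; first by split; [exact: GArg | split; [exact: Gcf | split; [exact: Gdef | exact: Gcl]]].
move=> F [HF1 [HF2 [HF3 HF4]]] a Ga; apply: Ga; exact: HF4.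
Qed.

Lemma preferred_exists (T : Form -> Prop) : exists P, preferred_ext vdash contr hat T P.
Proof.
pose adm (X : argument Form -> Prop) := (forall a, X a -> ArgV T a) /\
  conflict_free contr hat T X /\ (forall a, X a -> dfd T X a).
have [M [HM Hmax]] : exists A, adm A /\ forall B, classical_sets.proper A B -> ~ adm B.
  apply: classical_sets.Zorn_bigcup => F HF Htot.
  split; [|split].
  - move=> a [X FX Xa]; exact: (HF X FX).1 a Xa.
  - move=> a b [X FX Xa] [Y FY Yb]. case: (Htot X Y FX FY) => HXY.
    + exact: (HF Y FY).2.1 a b (HXY a Xa) Yb.
    + exact: (HF X FX).2.1 a b Xa (HXY b Yb).
  - move=> a [X FX Xa] c Hc Hca. have [e [Xe Hec]] := (HF X FX).2.2 a Xa c Hc Hca.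
    exists e; split => //; by exists X.
case: (HM) => H1 [H2 H3].
have Mcmp : cmp T M.
  split => //; split => //; split => // a Ha Hd.
  apply: NNPP => Hna.
  apply: (Hmax (fun x => M x \/ x = a)).
  - split; first by move=> x Mx; left.
    move=> Hsub; apply: Hna; exact: (Hsub a (or_intror erefl)).
  - split; first by move=> x [Mx| ->]; [exact: H1 | exact: Ha].
    split.
    + move=> x y [Mx| ->] [My| ->] Hxy.
      * exact: H2 x y Mx My Hxy.
      * have [m [Mm Hm]] := Hd x (H1 x Mx) Hxy. exact: H2 m x Mm Mx Hm.
      * have [m [Mm Hm]] := H3 y My a Ha Hxy.
        have [m' [Mm' Hm']] := Hd m (H1 m Mm) Hm. exact: H2 m' m Mm' Mm Hm'.
      * have [m [Mm Hm]] := Hd a Ha Hxy.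
        have [m' [Mm' Hm']] := Hd m (H1 m Mm) Hm. exact: H2 m' m Mm' Mm Hm'.
    + move=> x [Mx| ->] c Hc Hcx.
      * have [m [Mm Hm]] := H3 x Mx c Hc Hcx. by exists m; split => //; left.
      * have [m [Mm Hm]] := Hd c Hc Hcx. by exists m; split => //; left.
exists M; split => // F HF HMF a Fa.
apply: NNPP => Hna; apply: (Hmax F).
- split => // Hsub; exact: Hna (Hsub a Fa).
- case: HF => [? [? [? _]]]; split => //.
Qed.

End AF.

Lemma wit (Form : choiceType) (Atom : Type) (atoms : Form -> Atom -> Prop)
  (D : {fset Form}) (P : Form -> Prop) :
  (forall f, f \in D -> P f) -> atoms_within atoms D (AtomsOf atoms P).
Proof. move=> H a [f [Hf Ha]]; exists f; split => //; exact: H. Qed.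

Section Prime.
Variables (Form : choiceType) (Atom : Type) (atoms : Form -> Atom -> Prop)
  (vdash : {fset Form} -> Form -> Prop) (contr : Form -> Form -> Prop)
  (hat : {fset Form} -> {fset Form}).
Hypothesis hat0 : hat fset0 = fset0.
Hypothesis HPR : pre_relevance atoms vdash contr hat.
Local Notation ArgV := (Arg vdash).
Local Notation att := (attacks contr hat).
Local Notation cmp := (complete_ext vdash contr hat).
Local Notation dfd := (defends vdash contr hat).

Lemma hat_mono D D' : D `<=` D' -> hat D `<=` hat D'.
Proof. move=> H; have := HPR.2.2 D D'; by rewrite (fsetUidPr _ _ H). Qed.

Lemma att_mono (a b b' : argument Form) : b.1 `<=` b'.1 -> att a b -> att a b'.
Proof.
move=> H [phi [Hphi Hc]]; exists phi; split => //; exact: (fsubsetP (hat_mono H)).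
Qed.

Lemma unatt (a : argument Form) x : ~ att a (fset0, x).
Proof. by case=> phi [/=]; rewrite hat0 in_fset0. Qed.

Definition prodE (U : Form -> Prop) (X Y : argument Form -> Prop) :=
  fun b => ArgV U b /\ dfd U (fun e => X e \/ Y e) b.

Section Inner.
Set Default Proof Using "All".
Variables (S S' U : Form -> Prop).
Hypothesis HSS' : atom_disjoint atoms S S'.
Hypothesis HU : forall f, U f <-> S f \/ S' f.

Lemma split_prem (G : {fset Form}) : (forall f, f \in G -> U f) ->
  exists G1 G2, G = G1 `|` G2 /\ (forall f, f \in G1 -> S f) /\ (forall f, f \in G2 -> S' f).
Proof.
move=> HG; exists [fset x in G | boolp.asbool (S x)], [fset x in G | ~~ boolp.asbool (S x)].
split; last split.
- apply/fsetP => x; rewrite !inE; case: (x \in G); by case: (boolp.asbool (S x)).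
- by move=> x; rewrite !inE => /andP [_ /boolp.asboolP].
- move=> x; rewrite !inE => /andP [xG /boolp.asboolP Hn].
  by case: (proj1 (HU x) (HG x xG)).
Qed.

Lemma core S1 T1 S2 T2 phi psi :
  (forall f, f \in S1 -> S f) -> (forall f, f \in T1 -> S f) ->
  (forall f, f \in S2 -> S' f) -> (forall f, f \in T2 -> S' f) ->
  contr phi psi -> phi \in hat (T1 `|` T2) -> vdash (S1 `|` S2) psi ->
  (exists S1' phi1 psi1, S1' `<=` S1 /\ phi1 \in hat T1 /\ contr phi1 psi1 /\ vdash S1' psi1) \/
  (exists S2' phi2 psi2, S2' `<=` S2 /\ phi2 \in hat T2 /\ contr phi2 psi2 /\ vdash S2' psi2).
Proof.
move=> H1 H2 H3 H4.
exact: (HPR.2.1 _ _ HSS' S1 T1 S2 T2 (wit H1) (wit H2) (wit H3) (wit H4) phi psi).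
Qed.

Lemma reduce (c : argument Form) T1 T2 phi : ArgV U c ->
  (forall f, f \in T1 -> S f) -> (forall f, f \in T2 -> S' f) ->
  phi \in hat (T1 `|` T2) -> contr phi c.2 ->
  (exists c1 : argument Form, c1.1 `<=` c.1 /\ ArgV S c1 /\
      exists phi1, phi1 \in hat T1 /\ contr phi1 c1.2) \/
  (exists c2 : argument Form, c2.1 `<=` c.1 /\ ArgV S' c2 /\
      exists phi2, phi2 \in hat T2 /\ contr phi2 c2.2).
Proof.
move=> [Hc1 Hc2] HT1 HT2 Hphi Hcon.
have [C1 [C2 [Ec [HC1 HC2]]]] := split_prem Hc1.
rewrite Ec in Hc2.
case: (core HC1 HT1 HC2 HT2 Hcon Hphi Hc2) =>
  [[S1' [phi1 [psi1 [Hs [Hp [Hcn Hv]]]]]] | [S1' [phi1 [psi1 [Hs [Hp [Hcn Hv]]]]]]].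
- left; exists (S1', psi1); split.
    by rewrite /= Ec; exact: fsubset_trans Hs (fsubsetUl _ _).
  split; last by exists phi1.
  split => //= f Hf; apply: HC1; exact: (fsubsetP Hs).
- right; exists (S1', psi1); split.
    by rewrite /= Ec; exact: fsubset_trans Hs (fsubsetUr _ _).
  split; last by exists phi1.
  split => //= f Hf; apply: HC2; exact: (fsubsetP Hs).
Qed.

Lemma reduceS (c b : argument Form) : ArgV U c -> (forall f, f \in b.1 -> S f) -> att c b ->
  exists c1 : argument Form, c1.1 `<=` c.1 /\ ArgV S c1 /\ att c1 b.
Proof.
move=> Hc Hb [phi [Hphi Hcon]].
have Hphi' : phi \in hat (b.1 `|` fset0) by rewrite fsetU0.
have H0 : forall f, f \in (fset0 : {fset Form}) -> S' f by move=> f; rewrite in_fset0.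
case: (reduce Hc Hb H0 Hphi' Hcon) => [|[c1 [_ [_ [phi1 []]]]]]; last by rewrite hat0 in_fset0.
move=> [c1 [H1 [H2 [phi1 [H3 H4]]]]]; exists c1; split => //; split => //.
by exists phi1; split => //; move: H3; rewrite fsetU0.
Qed.

Lemma cross (e c : argument Form) : ArgV S' e -> (forall f, f \in c.1 -> S f) -> att e c ->
  exists psi, vdash fset0 psi /\ att (fset0, psi) c.
Proof.
move=> [He1 He2] Hc [phi [Hphi Hcon]].
have Hphi' : phi \in hat (c.1 `|` fset0) by rewrite fsetU0.
have He2' : vdash (fset0 `|` e.1) e.2 by rewrite fset0U.
have H0 : forall f, f \in (fset0 : {fset Form}) -> S f by move=> f; rewrite in_fset0.
have H0' : forall f, f \in (fset0 : {fset Form}) -> S' f by move=> f; rewrite in_fset0.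
case: (core H0 Hc He1 H0' Hcon Hphi' He2') =>
  [[S1' [phi1 [psi1 [Hs [Hp [Hcn Hv]]]]]] | [S2' [phi2 [psi2 [_ [Hp _]]]]]];
  last by move: Hp; rewrite hat0 in_fset0.
exists psi1; move: Hs; rewrite fsubset0 => /eqP Hs; subst S1'; split => //.
by exists phi1; split => //; move: Hp; rewrite fsetU0.
Qed.

Lemma ArgSU (a : argument Form) : ArgV S a -> ArgV U a.
Proof. by move=> [H1 H2]; split => // f Hf; apply/HU; left; apply: H1. Qed.

Lemma reduce2 (c b : argument Form) : ArgV U c -> (forall f, f \in b.1 -> U f) -> att c b ->
  exists c1 : argument Form, c1.1 `<=` c.1 /\ (ArgV S c1 \/ ArgV S' c1) /\ att c1 b.
Proof.
move=> Hc Hb [phi [Hphi Hcon]].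
have [T1 [T2 [Eb [HT1 HT2]]]] := split_prem Hb.
rewrite Eb in Hphi.
case: (reduce Hc HT1 HT2 Hphi Hcon) =>
  [[c1 [H1 [H2 [phi1 [H3 H4]]]]] | [c1 [H1 [H2 [phi1 [H3 H4]]]]]];
  exists c1; split => //; split; [by left| |by right|].
- exists phi1; split => //; apply: (fsubsetP (hat_mono _)) H3; rewrite Eb; exact: fsubsetUl.
- exists phi1; split => //; apply: (fsubsetP (hat_mono _)) H3; rewrite Eb; exact: fsubsetUr.
Qed.

Lemma G1 X (D : argument Form -> Prop) : cmp S X -> (forall e, X e -> D e) ->
  forall e, X e -> dfd U D e.
Proof.
move=> [HX1 [_ [HX3 _]]] HXD e Xe c Hc Hce.
have [c1 [Hsub [Hc1 Hatt]]] := reduceS Hc (HX1 e Xe).1 Hce.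
have [x [Xx Hx]] := HX3 e Xe c1 Hc1 Hatt.
exists x; split; [exact: HXD | exact: att_mono Hsub Hx].
Qed.

Lemma G2 X psi : cmp S X -> vdash fset0 psi -> X (fset0, psi).
Proof.
move=> [_ [_ [_ HX4]]] Hv; apply: HX4.
- by split => //= f; rewrite in_fset0.
- move=> c _ Hc; exfalso; exact: unatt Hc.
Qed.

Lemma G3 X Y (D : argument Form -> Prop) b : cmp S X -> cmp S' Y ->
  (forall e, D e -> X e \/ Y e) -> ArgV S b -> dfd U D b -> X b.
Proof.
move=> HX HY HD Hb Hd; have [_ [_ [_ HX4]]] := HX; apply: HX4 => // c Hc Hcb.
have [e [De Hec]] := Hd c (ArgSU Hc) Hcb.
case: (HD e De) => [Xe | Ye]; first by exists e.
have [psi [Hv Hatt]] := cross (HY.1 e Ye) Hc.1 Hec.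
exists (fset0, psi); split => //; exact: G2.
Qed.

Lemma cross_cf X (e e' : argument Form) : cmp S X -> ArgV S' e' -> X e -> ~ att e' e.
Proof.
move=> HX He' Xe Hatt.
have [psi [Hv Hat]] := cross He' (HX.1 e Xe).1 Hatt.
have HA : ArgV S (fset0, psi) by split => //= f; rewrite in_fset0.
have [x [_ Hx]] := HX.2.2.1 e Xe (fset0, psi) HA Hat.
exact: unatt Hx.
Qed.

Lemma subarg F (f g : argument Form) : cmp U F -> F f -> ArgV U g -> g.1 `<=` f.1 -> F g.
Proof.
move=> [_ [_ [HF3 HF4]]] Ff Hg Hsub; apply: HF4 => // c Hc Hcg.
exact: (HF3 _ Ff c Hc (att_mono Hsub Hcg)).
Qed.

Lemma restrict F : cmp U F -> cmp S (fun a => F a /\ ArgV S a).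
Proof.
move=> HF; have [HF1 [HF2 [HF3 HF4]]] := HF.
split; first by move=> a [].
split; first by move=> a b [Fa _] [Fb _]; apply: HF2.
split.
- move=> a [Fa Ha] c Hc Hca.
  have [f [Ff Hfc]] := HF3 a Fa c (ArgSU Hc) Hca.
  have [f1 [Hsub [Hf1 Hatt]]] := reduceS (HF1 f Ff) Hc.1 Hfc.
  exists f1; split => //; split => //; exact: subarg HF Ff (ArgSU Hf1) Hsub.
- move=> a Ha Hd; split => //; apply: HF4; first exact: ArgSU.
  move=> c Hc Hca.
  have [c1 [Hsub [Hc1 Hatt]]] := reduceS Hc Ha.1 Hca.
  have [x [[Fx _] Hx]] := Hd c1 Hc1 Hatt.
  exists x; split => //; exact: att_mono Hsub Hx.
Qed.

End Inner.

Lemma product S S' U (HSS' : atom_disjoint atoms S S')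
  (HU : forall f, U f <-> S f \/ S' f) X Y :
  cmp S X -> cmp S' Y ->
  cmp U (prodE U X Y) /\ (forall a, X a <-> prodE U X Y a /\ ArgV S a) /\
  (forall e, Y e -> prodE U X Y e).
Proof.
move=> HX HY.
have HSs : atom_disjoint atoms S' S by move=> a h1 h2; exact: HSS' a h2 h1.
have HUs : forall f, U f <-> S' f \/ S f.
  by move=> f; split => [/HU [] | []] => H; [right|left|apply/HU; right|apply/HU; left].
have XE : forall e, X e -> prodE U X Y e.
  move=> e Xe; split; first exact: (ArgSU HSS' HU (HX.1 e Xe)).
  by apply: (G1 HSS' HU HX) => // x Hx; left.
have YE : forall e, Y e -> prodE U X Y e.
  move=> e Ye; split; first exact: (ArgSU HSs HUs (HY.1 e Ye)).
  by apply: (G1 HSs HUs HY) => // x Hx; right.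
have EX : forall b, ArgV S b -> dfd U (fun e => X e \/ Y e) b -> X b.
  by move=> b; apply: (G3 HSS' HU HX HY).
have EY : forall b, ArgV S' b -> dfd U (fun e => X e \/ Y e) b -> Y b.
  move=> b; apply: (G3 HSs HUs HY HX) => e [] H; by [right|left].
split; last split => //.
- split; first by move=> a [].
  split.
  + move=> a b [Ha Hda] [Hb Hdb] Hab.
    have [e [De Hea]] := Hdb a Ha Hab.
    have HeU : ArgV U e by case: De => H; [exact: (XE e H).1 | exact: (YE e H).1].
    have [e' [De' He'e]] := Hda e HeU Hea.
    case: De => [Xe|Ye]; case: De' => [Xe'|Ye'].
    * exact: HX.2.1 e' e Xe' Xe He'e.
    * exact: (cross_cf HSS' HU HX (HY.1 e' Ye') Xe He'e).
    * exact: (cross_cf HSs HUs HY (HX.1 e' Xe') Ye He'e).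
    * exact: HY.2.1 e' e Ye' Ye He'e.
  split.
  + move=> a [Ha Hda] c Hc Hca; have [e [De Hec]] := Hda c Hc Hca.
    exists e; split => //; case: De => H; [exact: XE | exact: YE].
  + move=> b Hb Hd; split => // c Hc Hcb.
    have [d [[Hd1 Hd2] Hdc]] := Hd c Hc Hcb.
    have [d1 [Hsub [Hd1' Hatt]]] := reduce2 HSS' HU Hd1 Hc.1 Hdc.
    have Dd1 : dfd U (fun e => X e \/ Y e) d1.
      move=> x Hx Hxd1; exact: (Hd2 x Hx (att_mono Hsub Hxd1)).
    exists d1; split => //.
    by case: Hd1' => H; [left; exact: EX | right; exact: EY].
- move=> a; split; first by move=> Xa; split; [exact: XE | exact: HX.1].
  by move=> [[_ Ha] HS]; exact: EX.
Qed.

Lemma main (S S' : Form -> Prop) sem (E1 : argument Form -> Prop) :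
  atom_disjoint atoms S S' -> in_sem vdash contr hat sem S E1 ->
  exists E : argument Form -> Prop,
    in_sem vdash contr hat sem (fun f => S f \/ S' f) E /\
    (forall a, E1 a <-> (E a /\ Arg vdash S a)).
Proof.
move=> HSS' HE1.
have HSs : atom_disjoint atoms S' S by move=> a h1 h2; exact: HSS' a h2 h1.
have HU : forall f, (fun f => S f \/ S' f) f <-> S f \/ S' f by [].
have HUs : forall f, (fun f => S f \/ S' f) f <-> S' f \/ S f.
  by move=> f /=; split => [[]|[]] H; by [right|left].
case: sem HE1 => /= HE1.
- have [G HG] := grounded_exists vdash contr hat S'.
  have [Hc [Hr _]] := product HSS' HU HE1 HG.1.
  by exists (prodE (fun f => S f \/ S' f) E1 G).
- have [P HP] := preferred_exists vdash contr hat S'.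
  have [Hc [Hr HYE]] := product HSS' HU HE1.1 HP.1.
  exists (prodE (fun f => S f \/ S' f) E1 P); split => //; split => // F HF HEF b Fb.
  split; first exact: HF.1 b Fb.
  move=> c Hc' Hcb.
  have [f [Ff Hfc]] := HF.2.2.1 b Fb c Hc' Hcb.
  have [f1 [Hsub [Hf1 Hatt]]] := reduce2 HSS' HU (HF.1 f Ff) Hc'.1 Hfc.
  have Hf1U : Arg vdash (fun f => S f \/ S' f) f1.
    by case: Hf1 => H; [exact: (@ArgSU S S' (fun f => S f \/ S' f) HSS' HU _ H) | exact: (@ArgSU S' S (fun f => S f \/ S' f) HSs HUs _ H)].
  have Ff1 : F f1 := subarg HSS' HU HF Ff Hf1U Hsub.
  exists f1; split => //.
  case: Hf1 => Hf1; [left|right].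
  + have HR := restrict HSS' HU HF.
    have sub : subset_args E1 (fun a => F a /\ Arg vdash S a).
      move=> e Ee; split; [apply: HEF; exact: (proj1 (Hr e) Ee).1 | exact: HE1.1.1 e Ee].
    exact: (HE1.2 _ HR sub f1 (conj Ff1 Hf1)).
  + have HR := restrict HSs HUs HF.
    have sub : subset_args P (fun a => F a /\ Arg vdash S' a).
      move=> e Ee; split; [apply: HEF; exact: HYE | exact: HP.1.1 e Ee].
    exact: (HP.2 _ HR sub f1 (conj Ff1 Hf1)).
- have [G HG] := grounded_exists vdash contr hat S'.
  have [Hc [Hr _]] := product HSS' HU HE1.1 HG.1.
  exists (prodE (fun f => S f \/ S' f) E1 G); split => //; split => // F HF b [Hb Hd].
  apply: (HF.2.2.2 b Hb) => c Hc' Hcb. have [e [De Hec]] := Hd c Hc' Hcb.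
  exists e; split => //.
  case: De => [Xe|Ye].
  + exact: (HE1.2 _ (restrict HSS' HU HF) e Xe).1.
  + exact: (HG.2 _ (restrict HSs HUs HF) e Ye).1.
Qed.

End Prime.

Theorem lemma7 (Form : choiceType) (Atom : Type) (atoms : Form -> Atom -> Prop)
  (vdash : {fset Form} -> Form -> Prop) (contr : Form -> Form -> Prop)
  (hat : {fset Form} -> {fset Form})
  (hat0 : hat fset0 = fset0)
  (HPR : pre_relevance atoms vdash contr hat)
  (S S' : Form -> Prop) (HSS' : atom_disjoint atoms S S')
  (sem : semantics) (E1 : argument Form -> Prop)
  (HE1 : in_sem vdash contr hat sem S E1) :
  exists E : argument Form -> Prop,
    in_sem vdash contr hat sem (fun f => S f \/ S' f) E /\
    (forall a, E1 a <-> (E a /\ Arg vdash S a)).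
Proof. exact: (main hat0 HPR HSS' HE1). Qed.
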